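(* Let $\mathcal{E}$ be an even Dirichlet form on $L^2(X,m)$ and let $\mathfrak{D}$ be its Dirichlet space. Assume that every $f\in\mathfrak{D}$ is quasi-continuous, and let $C>0$. Then the following are equivalent: (i) every $f\in\mathfrak{D}$ is continuous and bounded (i.e. its quasi-continuous representative is a continuous bounded function on $X$), and $\|f\|_{L^\infty(X,m)}\le C\|f\|_{\mathfrak{D}}$ for all $f\in\mathfrak{D}$; (ii) $\mathrm{Cap}(\{x\})\ge \frac1C$ for every $x\in X$.
   Context: Standing setting: $X$ is a Hausdorff topological space and $m$ is a Borel measure on $X$ with full support, i.e. no nonempty open subset of $X$ has $m$-measure zero. $L^2(X,m)$ is the real $L^2$ space. A Dirichlet form is a functional $\mathcal{E}:L^2(X,m)\to[0,\infty]$ that is convex, lower semicontinuous and densely defined (its effective domain $\mathrm{dom}(\mathcal{E})=\{u:\mathcal{E}(u)<\infty\}$ is dense in $L^2(X,m)$), and such that for all $u,v\in L^2(X,m)$ and $\alpha>0$: (1) $\mathcal{E}(u\wedge v)+\mathcal{E}(u\vee v)\le \mathcal{E}(u)+\mathcal{E}(v)$; (2) $\mathcal{E}\big(v+\tfrac12((u-v+\alpha)_+-(u-v-\alpha)_-)\big)+\mathcal{E}\big(u-\tfrac12((u-v+\alpha)_+-(u-v-\alpha)_-)\big)\le \mathcal{E}(u)+\mathcal{E}(v)$, where $(\cdot)_+$, $(\cdot)_-$ denote positive and negative parts. $\mathcal{E}$ is called even if $\mathcal{E}(0)=0$ and $\mathcal{E}(-u)=\mathcal{E}(u)$ for all $u$.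 Set $\mathcal{E}_1(u)=\|u\|_{L^2(X,m)}^2+\mathcal{E}(u)$. The Dirichlet space is $\mathfrak{D}=\{u\in L^2(X,m):\exists\lambda>0,\ \mathcal{E}_1(\lambda u)<\infty\}$ with the Minkowski norm $\|u\|_{\mathfrak{D}}=\inf\{\lambda>0:\mathcal{E}_1(u/\lambda)\le 1\}$. Capacity: for $A\subseteq X$ let $\mathcal{L}_A=\{u\in L^2(X,m): u\ge 1\ m\text{-a.e. on } U \text{ for some open } U\supseteq A\}$ and define the norm-capacity $\mathrm{Cap}(A)=\inf\{\|u\|_{\mathfrak{D}}: u\in\mathcal{L}_A\}$ (with $\|u\|_{\mathfrak{D}}=\infty$ for $u\notin\mathfrak{D}$, $\inf\emptyset=\infty$). A function $f:X\to\mathbb{R}$ is quasi-continuous if for every $\varepsilon>0$ there is an open set $O\subseteq X$ with $\mathrm{Cap}(O)\le\varepsilon$ such that $f|_{X\setminus O}$ is continuous. An element $f\in L^2(X,m)$ is called quasi-continuous if it has a quasi-continuous representative, and $f$ is then identified with that representative. *)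

(* Defs.v *)
From HB Require Import structures.
From mathcomp Require Import all_boot all_order all_algebra.
From mathcomp Require Import all_classical all_reals all_analysis ess_sup_inf.
Set Implicit Arguments. Unset Strict Implicit. Unset Printing Implicit Defensive.
Import Order.TTheory GRing.Theory Num.Def Num.Theory.
Import numFieldNormedType.Exports.
Local Open Scope classical_set_scope.
Local Open Scope ring_scope.

Notation borelType X := (g_sigma_algebraType (@open X)).

Section Dirichlet.
Context {R : realType} {X : ptopologicalType}.
Variable m : {measure set (borelType X) -> \bar R}.

Definition full_support : Prop :=
  forall U : set X, open U -> U !=set0 -> m U <> 0%E.

(* Elements of L^2(X,m) are represented by square-integrable Borel functions;
   functionals on L^2 are functionals on such functions that do not
   distinguish m-a.e. equal functions. *)
Definition L2 (f : X -> R) : Prop :=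
  measurable_fun (setT : set (borelType X)) f /\
  (\int[m]_x ((f x) ^+ 2)%:E < +oo)%E.

Definition L2norm (f : X -> R) : R :=
  Num.sqrt (fine (\int[m]_x ((f x) ^+ 2)%:E)).

Definition ae_eqf (f g : X -> R) : Prop := {ae m, forall x, f x = g x}.

Definition posp (r : R) : R := Num.max r 0.
Definition negp (r : R) : R := Num.max (- r) 0.

Variable E : (X -> R) -> \bar R.

Record dirichlet_form : Prop := DirichletForm {
  df_wd : forall u v, L2 u -> L2 v -> ae_eqf u v -> E u = E v;
  df_nonneg : forall u, L2 u -> (0 <= E u)%E;
  df_convex : forall u v, L2 u -> L2 v -> forall t : R, 0 <= t <= 1 ->
    (E (fun x => (t * u x + (1 - t) * v x)%R) <= t%:E * E u + (1 - t)%:E * E v)%E;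
  df_lsc : forall (u_ : nat -> X -> R) (u : X -> R),
    (forall n, L2 (u_ n)) -> L2 u ->
    (fun n => L2norm (fun x => u_ n x - u x)) @ \oo --> (0 : R) ->
    (E u <= limn_einf (fun n => E (u_ n)))%E;
  df_dense : forall u, L2 u -> forall eps : R, 0 < eps ->
    exists v, L2 v /\ (E v < +oo)%E /\ L2norm (fun x => u x - v x) < eps;
  df_latt : forall u v, L2 u -> L2 v ->
    (E (fun x => Num.min (u x) (v x)) + E (fun x => Num.max (u x) (v x))
       <= E u + E v)%E;
  df_contr : forall u v, L2 u -> L2 v -> forall alpha : R, 0 < alpha ->
    let w := fun x => 2^-1 * (posp (u x - v x + alpha) - negp (u x - v x - alpha)) in
    (E (fun x => (v x + w x)%R) + E (fun x => (u x - w x)%R) <= E u + E v)%E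
}.

Definition even_form : Prop :=
  E (fun _ => 0) = 0%E /\ forall u, L2 u -> E (fun x => - u x) = E u.

Definition E1 (u : X -> R) : \bar R := ((L2norm u) ^+ 2)%:E + E u.

Definition inD (u : X -> R) : Prop :=
  L2 u /\ exists l : R, 0 < l /\ (E1 (fun x => (l * u x)%R) < +oo)%E.

(* Minkowski norm (inf of the empty set is +oo, so it is +oo off the
   Dirichlet space, for u in L^2) *)
Definition Dnorm (u : X -> R) : \bar R :=
  ereal_inf (EFin @` [set l : R | 0 < l /\ (E1 (fun x => (u x / l)%R) <= 1)%E]).

Definition LA (A : set X) : set (X -> R) :=
  [set u | L2 u /\ exists U : set X, open U /\ A `<=` U /\
                  {ae m, forall x, U x -> 1 <= u x}].

Definition Cap (A : set X) : \bar R := ereal_inf (Dnorm @` LA A).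

Definition quasi_continuous (f : X -> R) : Prop :=
  forall eps : R, 0 < eps -> exists O : set X,
    open O /\ (Cap O <= eps%:E)%E /\ {within ~` O, continuous f}.

Definition qc_elem (f : X -> R) : Prop :=
  exists g : X -> R, quasi_continuous g /\ ae_eqf f g.

Definition Linfnorm (f : X -> R) : \bar R :=
  ess_sup m (fun x => (`| f x |)%:E).

End Dirichlet.

(* Main.v *)
Require Import Defs.
From HB Require Import structures.
From mathcomp Require Import all_boot all_order all_algebra.
From mathcomp Require Import all_classical all_reals all_analysis ess_sup_inf.
From mathcomp Require Import measurable_realfun ring lra.
Import Order.TTheory GRing.Theory Num.Def Num.Theory.
Import numFieldNormedType.Exports.
Local Open Scope classical_set_scope.
Local Open Scope ring_scope.

Section Aux.
Context {R : realType} {X : ptopologicalType}.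
Variable m : {measure set (borelType X) -> \bar R}.
Variable E : (X -> R) -> \bar R.
Implicit Types (f g h gh u v : X -> R).

Lemma sq_meas f : measurable_fun (setT : set (borelType X)) f ->
  measurable_fun (setT : set (borelType X)) (fun x => ((f x) ^+ 2)%:E).
Proof. by move=> mf; apply/measurable_EFinP; exact: measurable_funX. Qed.

Lemma int_sqZ (c : R) f : measurable_fun (setT : set (borelType X)) f ->
  (\int[m]_x ((c * f x) ^+ 2)%:E = (c ^+ 2)%:E * \int[m]_x ((f x) ^+ 2)%:E)%E.
Proof.
move=> mf.
have f0 : forall x, [set: borelType X] x -> (0 <= ((f x) ^+ 2)%:E)%E.
  by move=> x _; rewrite lee_fin sqr_ge0.
rewrite -(@ge0_integralZl_EFin _ _ _ m setT measurableT _ f0 (sq_meas _ mf) (c ^+ 2) (sqr_ge0 c)).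
by apply: eq_integral => x _; rewrite exprMn EFinM.
Qed.

Lemma L2Z (c : R) f : L2 m f -> L2 m (fun x => c * f x).
Proof.
move=> [mf fi]; split.
- exact: (measurable_funM (measurable_cst c) mf).
- rewrite int_sqZ //.
  have I0 : (0 <= \int[m]_x ((f x) ^+ 2)%:E)%E.
    by apply: integral_ge0 => x _; rewrite lee_fin sqr_ge0.
  have : (\int[m]_x ((f x) ^+ 2)%:E)%E \is a fin_num by rewrite ge0_fin_numE.
  by move=> /fineK <-; rewrite -EFinM ltry.
Qed.

Lemma sqL2 f : L2norm m f ^+ 2 = fine (\int[m]_x ((f x) ^+ 2)%:E)%E.
Proof.
rewrite sqr_sqrtr // fine_ge0 // integral_ge0 // => x _.
by rewrite lee_fin sqr_ge0.
Qed.

Lemma L2normZ2 c f : L2 m f ->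
  L2norm m (fun x => c * f x) ^+ 2 = c ^+ 2 * L2norm m f ^+ 2.
Proof.
move=> [mf fi]; rewrite !sqL2 int_sqZ // fineM //.
have I0 : (0 <= \int[m]_x ((f x) ^+ 2)%:E)%E.
  by apply: integral_ge0 => x _; rewrite lee_fin sqr_ge0.
by rewrite ge0_fin_numE.
Qed.

Lemma L2normN f : L2norm m (fun x => - f x) = L2norm m f.
Proof.
rewrite /L2norm; congr (Num.sqrt (fine _)).
by apply: eq_integral => x _; rewrite sqrrN.
Qed.

Lemma L2_0 : L2 m (fun _ => 0).
Proof.
split; first exact: measurable_cst.
rewrite (eq_integral (cst 0%E)); first by rewrite integral0 ltry.
by move=> x _; rewrite expr0n.
Qed.

Lemma Dnorm_ge0 f : (0 <= Dnorm m E f)%E.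
Proof.
apply: le_ereal_inf_tmp => _ [l [l0 _] <-].
by rewrite lee_fin ltW.
Qed.

Hypothesis hD : dirichlet_form m E.
Hypothesis hE : even_form m E.

Lemma Escale v (s : R) : L2 m v -> 0 <= s <= 1 ->
  (E (fun x => (s * v x)%R) <= s%:E * E v)%E.
Proof.
move=> Lv s01.
have := df_convex hD Lv L2_0 s01.
have -> : (fun x => s * v x + (1 - s) * 0) = (fun x => s * v x).
  by apply: funext => x; rewrite mulr0 addr0.
by rewrite hE.1 mule0 adde0.
Qed.

Lemma Dnorm_fin f : inD m E f -> (Dnorm m E f < +oo)%E.
Proof.
move=> [Lf [l [l0 Efin]]].
set v := fun x => l * f x.
have Lv : L2 m v by exact: L2Z.
set A := L2norm m v ^+ 2.
have A0 : 0 <= A by exact: sqr_ge0.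
have B0 : (0 <= E v)%E := df_nonneg hD Lv.
have Bfin : E v \is a fin_num.
  rewrite ge0_fin_numE //.
  move: Efin; rewrite /E1 -/v.
  by apply: le_lt_trans; rewrite leeDr // lee_fin.
set b := fine (E v).
have b0 : 0 <= b by exact: fine_ge0.
set s := (1 + A + b)^-1.
have s0 : 0 < s by rewrite invr_gt0; lra.
have s1 : s <= 1 by rewrite invf_le1; lra.
have sA : s * (1 + A + b) = 1 by rewrite mulVf //; lra.
apply: (@le_lt_trans _ _ (s * l)^-1%:E); last exact: ltry.
apply: ge_ereal_inf; exists (s * l)^-1%:E => //.
exists (s * l)^-1; split; first by rewrite invr_gt0 mulr_gt0.
have -> : (fun x => f x / (s * l)^-1) = (fun x => s * v x).
  by apply: funext => x; rewrite /v invrK; ring.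
rewrite /E1 L2normZ2 //.
have hs : 0 <= s <= 1 by rewrite (ltW s0) s1.
apply: (@le_trans _ _ ((s ^+ 2 * A)%:E + s%:E * E v)%E).
  by rewrite leeD2l //; exact: (Escale _ _ Lv hs).
rewrite -/A -(fineK Bfin) -/b -EFinM -EFinD lee_fin.
have := mulr_ge0 (ltW s0) A0.
nra.
Qed.

Lemma Cap_mono (A B : set X) : A `<=` B -> (Cap m E A <= Cap m E B)%E.
Proof.
move=> AB; apply: ereal_inf_le_tmp; apply: image_subset.
move=> u [Lu [U [oU [BU aeU]]]]; split => //; exists U; split => //; split => //.
exact: subset_trans BU.
Qed.

Lemma ae_mono (P Q : X -> Prop) : (forall x, P x -> Q x) ->
  {ae m, forall x, P x} -> {ae m, forall x, Q x}.
Proof.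
move=> PQ [N [mN N0 sN]]; exists N; split => // x /= nQ; apply: sN => /= Px.
exact: nQ (PQ _ Px).
Qed.

Lemma ae_and (P Q : X -> Prop) : {ae m, forall x, P x} -> {ae m, forall x, Q x} ->
  {ae m, forall x, P x /\ Q x}.
Proof.
move=> hP hQ; have [N [mN N0 sN]] := negligibleU hP hQ.
exists N; split => // x /= nPQ; apply: sN.
have [Px|nPx] := pselect (P x); last by left.
by right => /= Qx; exact: nPQ.
Qed.

Lemma open_meas (U : set X) : open U -> measurable (U : set (borelType X)).
Proof. by move=> oU; apply: sub_gen_smallest. Qed.

Lemma cap_bound h gh x (t l : R) : L2 m h -> ae_eqf m h gh -> continuous gh ->
  0 < t -> t < gh x -> 0 < l -> (E1 m E (fun y => (h y / l)%R) <= 1)%E ->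
  (Cap m E [set x] <= (l / t)%:E)%E.
Proof.
move=> Lh ae cg t0 tx l0 El.
apply: ge_ereal_inf.
exists (Dnorm m E (fun y => h y / t)); last first.
  apply: ge_ereal_inf; exists (l / t)%:E => //.
  exists (l / t); split; first exact: divr_gt0.
  have -> : (fun y => h y / t / (l / t)) = (fun y => h y / l) => //.
  apply: funext => y; field.
  by apply/andP; split; rewrite gt_eqF.
exists (fun y => h y / t) => //; split.
  have -> : (fun y => h y / t) = (fun y => t^-1 * h y).
    by apply: funext => y; rewrite mulrC.
  exact: L2Z.
exists (gh @^-1` [set r | t < r]); split.
  by apply: open_comp; [move=> y _; exact: cg | exact: open_gt].
split; first by move=> y ->.
apply: ae_mono ae => y hy /= Uy.
by rewrite ler_pdivlMr // mul1r hy ltW.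
Qed.

End Aux.
Arguments ae_mono {R X m P Q}.
Arguments ae_and {R X m P Q}.

Lemma Linf_ge1 {R : realType} {X : ptopologicalType}
  (m : {measure set (borelType X) -> \bar R}) (u : X -> R) (U : set X) x :
  full_support m -> open U -> U x -> {ae m, forall y, U y -> 1 <= u y} ->
  (1 <= Linfnorm m u)%E.
Proof.
move=> fs oU Ux aeU.
rewrite leNgt; apply/negP => lt.
have H := ae_and (ess_sup_ge m (fun y => (`|u y|)%:E)) aeU.
have [N [mN N0 sN]] : {ae m, forall y, ~ U y}.
  apply: ae_mono H => y [h1 h2] Uy.
  have := h2 Uy => h3.
  have : (1 <= Linfnorm m u)%E.
    apply: le_trans h1; rewrite lee_fin; apply: le_trans h3 _; exact: ler_norm.
  by rewrite leNgt lt.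
have UN : U `<=` N by move=> y Uy; apply: sN => /=; apply.
have := subset_measure0 (open_meas _ oU) mN UN N0.
by apply: fs => //; exists x.
Qed.

Theorem mainTheorem3 (R : realType) (X : ptopologicalType)
  (m : {measure set (borelType X) -> \bar R}) (E : (X -> R) -> \bar R) (C : R) :
  hausdorff_space X -> full_support m ->
  dirichlet_form m E -> even_form m E ->
  (forall f, inD m E f -> qc_elem m E f) ->
  0 < C ->
  ((forall f, inD m E f ->
      exists g : X -> R, continuous g /\ (exists M : R, forall x, `| g x | <= M)
                         /\ ae_eqf m f g) /\
   (forall f, inD m E f -> (Linfnorm m f <= C%:E * Dnorm m E f)%E))
  <->
  (forall x : X, ((C^-1)%:E <= Cap m E [set x])%E).
Proof.
move=> hX fs hD hE hqc C0; split.
- move=> [_ Hb] x.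
  apply: le_ereal_inf_tmp => _ [u [Lu [U [oU [xU aeU]]]] <-].
  have Dg0 := Dnorm_ge0 m E u.
  case Dq : (Dnorm m E u) => [r| |]; last by rewrite Dq in Dg0.
  + have : (Dnorm m E u < +oo)%E by rewrite Dq ltry.
    move=> /ereal_inf_lt [_ [l [l0 El] <-]] _.
    have Du : inD m E u.
      split => //; exists l^-1; split; first by rewrite invr_gt0.
      have -> : (fun x => l^-1 * u x) = (fun x => u x / l).
        by apply: funext => y; rewrite mulrC.
      exact: le_lt_trans El (ltry _).
    have := Hb u Du; rewrite Dq.
    have L1 := Linf_ge1 m u U x fs oU (xU x erefl) aeU.
    move=> H; have := le_trans L1 H; rewrite -EFinM !lee_fin => h1.
    by rewrite -[C^-1]mulr1 ler_pdivrMl.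
  + exact: leey.
- move=> Hcap.
  have hkey : forall f, inD m E f -> exists g, continuous g /\ ae_eqf m f g /\
      forall x, `|g x| <= C * fine (Dnorm m E f).
    move=> f Df; have Lf := Df.1; have [g [qg aeg]] := hqc f Df.
    have cg : continuous g.
      have e0 : 0 < C^-1 / 2 by rewrite divr_gt0 // invr_gt0.
      have [Oo [oO [cO cgO]]] := qg _ e0.
      have O0 : ~` Oo = setT.
        apply/seteqP; split => // y _ Oy.
        have h1 := Hcap y.
        have h2 := @Cap_mono R X m E [set y] Oo (fun z zy => eq_ind_r Oo Oy zy).
        have := le_trans h1 (le_trans h2 cO); rewrite lee_fin.
        have : 0 < C^-1 by rewrite invr_gt0.
        lra.
      rewrite O0 continuous_open_subspace in cgO; last exact: openT.
      by move=> y; apply: cgO; exact: in_setT.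
    exists g; split => //; split => // y.
    set d := Dnorm m E f.
    have dfin : d \is a fin_num.
      by rewrite ge0_fin_numE ?Dnorm_ge0 // Dnorm_fin.
    have d0 : 0 <= fine d by apply: fine_ge0; exact: Dnorm_ge0.
    rewrite leNgt; apply/negP => lt.
    set t := (C * fine d + `|g y|) / 2.
    have Cd0 : 0 <= C * fine d by rewrite mulr_ge0 // ltW.
    have ht1 : C * fine d < t by rewrite /t; lra.
    have ht2 : t < `|g y| by rewrite /t; lra.
    have t0 : 0 < t by lra.
    have : (d < (t / C)%:E)%E by rewrite -(fineK dfin) lte_fin ltr_pdivlMr // mulrC.
    move=> /ereal_inf_lt [_ [l [l0 El] <-]]; rewrite lte_fin => ltl.
    have lt_C : l / t < C^-1.
      by rewrite ltr_pdivrMr // mulrC; move: ltl; rewrite mulrC.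
    suff H : (Cap m E [set y] <= (l / t)%:E)%E.
      by have := le_trans (Hcap y) H; rewrite lee_fin leNgt lt_C.
    have [gy|gy] := lerP 0 (g y).
    + apply: (@cap_bound R X m E f g y t l Lf aeg cg t0 _ l0 El).
      by rewrite -(ger0_norm gy).
    + have Lfl : L2 m (fun z => f z / l).
        have -> : (fun z => f z / l) = (fun z => l^-1 * f z).
          by apply: funext => z; rewrite mulrC.
        exact: L2Z.
      apply: (@cap_bound R X m E (fun z => - f z) (fun z => - g z) y t l).
      * have -> : (fun z => - f z) = (fun z => -1 * f z).
          by apply: funext => z; rewrite mulN1r.
        exact: L2Z.
      * by apply: ae_mono aeg => z ->.
      * by move=> z; apply: continuousN; exact: cg.
      * exact: t0.
      * by rewrite -(ltr0_norm gy).
      * exact: l0.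
      * have -> : (fun z => - f z / l) = (fun z => - (f z / l)).
          by apply: funext => z; rewrite mulNr.
        by rewrite /E1 L2normN hE.2.
  split.
  + move=> f Df; have [g [cg [aeg bg]]] := hkey f Df.
    exists g; split => //; split => //; by exists (C * fine (Dnorm m E f)).
  + move=> f Df; have [g [cg [aeg bg]]] := hkey f Df.
    have dfin : Dnorm m E f \is a fin_num.
      by rewrite ge0_fin_numE ?Dnorm_ge0 // Dnorm_fin.
    rewrite -(fineK dfin) -EFinM.
    apply/ess_supP; apply: ae_mono aeg => z ->.
    by rewrite lee_fin.
Qed.
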